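(* If a topologically mixing homeomorphism $f$ of a compact metric space has the L-shadowing property, then it has the two-sided limit shadowing property.
   Context: L-shadowing: for every $\varepsilon>0$ there is $\delta>0$ such that every sequence $(x_k)_{k\in\mathbb{Z}}$ with $d(f(x_k),x_{k+1})\le\delta$ for all $k$ and $d(f(x_k),x_{k+1})\to0$ as $|k|\to\infty$ admits $z$ with $d(f^k(z),x_k)\le\varepsilon$ for all $k$ and $d(f^k(z),x_k)\to0$ as $|k|\to\infty$. Two-sided limit shadowing: for every $(x_k)_{k\in\mathbb{Z}}$ with $d(f(x_k),x_{k+1})\to0$ as $|k|\to\infty$ there is $y$ with $d(f^k(y),x_k)\to0$ as $|k|\to\infty$. Topologically mixing: for all nonempty open $U,V$ there is $N$ with $f^k(U)\cap V\ne\emptyset$ for all $k\ge N$. *)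

(* Defs.v *)
From Stdlib Require Import Reals ZArith.
Open Scope R_scope.

Record MetricSpace := {
  msX :> Type;
  msd : msX -> msX -> R;
  msd_nonneg : forall x y, 0 <= msd x y;
  msd_eq0 : forall x y, msd x y = 0 <-> x = y;
  msd_sym : forall x y, msd x y = msd y x;
  msd_tri : forall x y z, msd x z <= msd x y + msd y z
}.

Section Metric.
Variable M : MetricSpace.
Let d := msd M.

Definition is_open (U : M -> Prop) : Prop :=
  forall x, U x -> exists r, 0 < r /\ forall y, d x y < r -> U y.

Definition compact_space : Prop :=
  forall (I : Type) (U : I -> M -> Prop),
    (forall i, is_open (U i)) ->
    (forall x, exists i, U i x) ->
    exists l : list I, forall x, exists i, List.In i l /\ U i x.

Definition continuous (f : M -> M) : Prop :=
  forall x eps, 0 < eps -> exists delta, 0 < delta /\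
    forall y, d x y < delta -> d (f x) (f y) < eps.

Definition homeomorphism (f : M -> M) : Prop :=
  continuous f /\ exists g : M -> M,
    continuous g /\ (forall x, g (f x) = x) /\ (forall x, f (g x) = x).

Fixpoint iter_nat (f : M -> M) (n : nat) (x : M) : M :=
  match n with O => x | S n => f (iter_nat f n x) end.

Definition iterZ (f finv : M -> M) (k : Z) (x : M) : M :=
  match k with
  | Z0 => x
  | Zpos p => iter_nat f (Pos.to_nat p) x
  | Zneg p => iter_nat finv (Pos.to_nat p) x
  end.

Definition tends_to_zero_Z (u : Z -> R) : Prop :=
  forall eps, 0 < eps -> exists N : Z,
    forall k : Z, (N <= Z.abs k)%Z -> Rabs (u k) < eps.

Definition image (f : M -> M) (U : M -> Prop) : M -> Prop :=
  fun y => exists x, U x /\ f x = y.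

Definition topologically_mixing (f : M -> M) : Prop :=
  forall U V : M -> Prop, is_open U -> is_open V ->
    (exists x, U x) -> (exists x, V x) ->
    exists N : nat, forall k : nat, (N <= k)%nat ->
      exists y, image (iter_nat f k) U y /\ V y.

Definition L_shadowing (f finv : M -> M) : Prop :=
  forall eps, 0 < eps -> exists delta, 0 < delta /\
    forall xs : Z -> M,
      (forall k, d (f (xs k)) (xs (k + 1)%Z) <= delta) ->
      tends_to_zero_Z (fun k => d (f (xs k)) (xs (k + 1)%Z)) ->
      exists z : M,
        (forall k, d (iterZ f finv k z) (xs k) <= eps) /\
        tends_to_zero_Z (fun k => d (iterZ f finv k z) (xs k)).

Definition two_sided_limit_shadowing (f finv : M -> M) : Prop :=
  forall xs : Z -> M,
    tends_to_zero_Z (fun k => d (f (xs k)) (xs (k + 1)%Z)) ->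
    exists y : M, tends_to_zero_Z (fun k => d (iterZ f finv k y) (xs k)).

End Metric.

(* Main.v *)
From Stdlib Require Import Reals ZArith Lra Lia List.
Require Import Defs.
Open Scope R_scope.

Lemma ball_open (M : MetricSpace) (c : M) (r : R) :
  is_open M (fun y => msd M c y < r).
Proof.
  intros x Hx. exists (r - msd M c x). split; [lra|].
  intros y Hy. pose proof (msd_tri M c x y). lra.
Qed.

Lemma unif_mix (M : MetricSpace) (f : M -> M) :
  compact_space M -> topologically_mixing M f ->
  forall a r, 0 < r -> exists N0 : nat, forall j, (N0 <= j)%nat -> forall b : M,
    exists w, msd M a w < r /\ msd M (iter_nat M f j w) b < r.
Proof.
  intros Hc Hm a r Hr.
  destruct (Hc M (fun c y => msd M c y < r/2)) as [l Hl].
  - intro c; apply ball_open.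
  - intro x; exists x. rewrite (proj2 (msd_eq0 M x x) eq_refl). lra.
  - assert (H : exists N, forall c, In c l -> forall k, (N <= k)%nat ->
        exists y, image M (iter_nat M f k) (fun y => msd M a y < r) y
                  /\ msd M c y < r/2).
    { clear Hl. induction l as [|c l IH].
      - exists 0%nat. intros c [].
      - destruct IH as [N1 HN1].
        destruct (Hm (fun y => msd M a y < r) (fun y => msd M c y < r/2))
          as [N2 HN2].
        + apply ball_open.
        + apply ball_open.
        + exists a. rewrite (proj2 (msd_eq0 M a a) eq_refl). lra.
        + exists c. rewrite (proj2 (msd_eq0 M c c) eq_refl). lra.
        + exists (Nat.max N1 N2). intros c' [<-|Hin] k Hk.
          * apply HN2; lia.
          * apply HN1; auto; lia. }
    destruct H as [N HN]. exists N. intros j Hj b.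
    destruct (Hl b) as [c [Hin Hcb]].
    destruct (HN c Hin j Hj) as [y [[w [Hw Hwy]] Hcy]].
    exists w. split; auto. subst y.
    pose proof (msd_tri M (iter_nat M f j w) c b).
    rewrite msd_sym in Hcy. lra.
Qed.

Theorem mainTheorem10 (M : MetricSpace) (f finv : M -> M) :
  compact_space M ->
  continuous M f -> continuous M finv ->
  (forall x, finv (f x) = x) -> (forall x, f (finv x) = x) ->
  topologically_mixing M f ->
  L_shadowing M f finv ->
  two_sided_limit_shadowing M f finv.
Proof.
  intros Hc _ _ _ _ Hmix HL xs Hx.
  destruct (HL 1 Rlt_0_1) as [δ [Hδ HLs]].
  destruct (Hx δ Hδ) as [N HN].
  set (A := Z.max N 1).
  destruct (unif_mix M f Hc Hmix (f (xs (- A)%Z)) (δ/2) ltac:(lra)) as [N0 HN0].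
  set (B := (Z.of_nat N0 + A)%Z).
  destruct (HN0 (Z.to_nat (B + A - 1)) ltac:(unfold B, A; lia) (xs B))
    as [w [Hw1 Hw2]].
  set (z := fun k => if (k <=? - A)%Z then xs k
                     else if (k <? B)%Z then iter_nat M f (Z.to_nat (k + A - 1)) w
                     else xs k).
  assert (z_out : forall k, (k <= - A \/ B <= k)%Z -> z k = xs k).
  { intros k Hk. unfold z. destruct (Z.leb_spec k (-A)); auto.
    destruct (Z.ltb_spec k B); auto. unfold B, A in *; lia. }
  assert (z_in : forall k, (- A < k < B)%Z ->
            z k = iter_nat M f (Z.to_nat (k + A - 1)) w).
  { intros k Hk. unfold z. destruct (Z.leb_spec k (-A)); [lia|].
    destruct (Z.ltb_spec k B); [auto|lia]. }
  assert (xerr : forall k, (N <= Z.abs k)%Z ->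
            msd M (f (xs k)) (xs (k + 1)%Z) < δ).
  { intros k Hk. pose proof (HN k Hk). pose proof (Rle_abs (msd M (f (xs k)) (xs (k + 1)%Z))). lra. }
  assert (HA1 : (1 <= A)%Z) by (unfold A; lia).
  assert (HAN : (N <= A)%Z) by (unfold A; lia).
  assert (HAB : (A <= B)%Z) by (unfold B; lia).
  destruct (HLs z) as [y [_ Hy]].
  - intro k.
    assert (Hc5 : (k <= -A-1 \/ k = -A \/ (-A < k < B-1) \/ k = B-1 \/ B <= k)%Z) by lia.
    destruct Hc5 as [H|[H|[H|[H|H]]]].
    + rewrite !z_out by lia. left. apply xerr. lia.
    + subst k. rewrite z_out by lia. rewrite z_in by lia.
      replace (Z.to_nat (- A + 1 + A - 1)) with 0%nat by lia. simpl. lra.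
    + rewrite !z_in by lia.
      replace (Z.to_nat (k + 1 + A - 1)) with (S (Z.to_nat (k + A - 1))) by lia.
      simpl. rewrite (proj2 (msd_eq0 M _ _) eq_refl). lra.
    + subst k. rewrite z_in by lia. rewrite z_out by lia.
      replace (B - 1 + 1)%Z with B by lia.
      change (f (iter_nat M f (Z.to_nat (B - 1 + A - 1)) w))
        with (iter_nat M f (S (Z.to_nat (B - 1 + A - 1))) w).
      replace (S (Z.to_nat (B - 1 + A - 1))) with (Z.to_nat (B + A - 1)) by lia.
      lra.
    + rewrite !z_out by lia. left. apply xerr. lia.
  - intros eps Heps. destruct (Hx eps Heps) as [N2 HN2].
    exists (Z.max N2 (Z.max (A + 1) B)). intros k Hk.
    rewrite !z_out by lia. apply HN2. lia.
  - exists y. intros eps Heps. destruct (Hy eps Heps) as [N1 HN1].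
    exists (Z.max N1 B). intros k Hk.
    rewrite <- (z_out k) by lia. apply HN1. lia.
Qed.
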